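(* Let $(X,(\cdot,\cdot|\cdot))$ be a 2-inner product space over $\mathbb{K}\in\{\mathbb{R},\mathbb{C}\}$, let $n$ be a positive integer, let $z_1,\dots,z_n,z\in X$ and $\mu_1,\dots,\mu_n\in\mathbb{K}$. Then \[ \Big\|\sum_{i=1}^n\mu_iz_i\,\Big|\,z\Big\|^2\le \sum_{i=1}^n|\mu_i|^2\max_{1\le i\le n}\|z_i|z\|^2+\Big[\Big(\sum_{i=1}^n|\mu_i|^2\Big)^2-\sum_{i=1}^n|\mu_i|^4\Big]^{1/2}\Big(\sum_{1\le i\ne j\le n}|(z_i,z_j|z)|^2\Big)^{1/2} \] \[ \le \sum_{i=1}^n|\mu_i|^2\left\{\max_{1\le i\le n}\|z_i|z\|^2+\Big(\sum_{1\le i\ne j\le n}|(z_i,z_j|z)|^2\Big)^{1/2}\right\}. \]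
   Context: A 2-inner product on a linear space $X$ of dimension greater than $1$ over $\mathbb{K}$ ($\mathbb{K}=\mathbb{R}$ or $\mathbb{C}$) is a function $(\cdot,\cdot|\cdot):X\times X\times X\to\mathbb{K}$ such that for all $x,x',y,z\in X$ and $\alpha\in\mathbb{K}$: (i) $(x,x|z)\ge 0$, and $(x,x|z)=0$ iff $x$ and $z$ are linearly dependent; (ii) $(x,x|z)=(z,z|x)$; (iii) $(y,x|z)=\overline{(x,y|z)}$; (iv) $(\alpha x,y|z)=\alpha(x,y|z)$; (v) $(x+x',y|z)=(x,y|z)+(x',y|z)$. The associated 2-norm is $\|x|z\|=\sqrt{(x,x|z)}$. The sum $\sum_{1\le i\ne j\le n}$ runs over all ordered pairs $(i,j)$ with $i\ne j$. *)

(* Defs.v *)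
(* The scalar field K is either a real closed field R
   (real case, conjugation = identity, sqrt = Num.sqrt) or its complex
   closure R[i] = complex R (complex case, conjugation = Num.conj,
   sqrt = sqrtC). *)
From HB Require Import structures.
From mathcomp Require Import all_boot all_order all_algebra.
From mathcomp Require Import complex.
Set Implicit Arguments. Unset Strict Implicit. Unset Printing Implicit Defensive.
Import Order.TTheory GRing.Theory Num.Theory.
Local Open Scope ring_scope.

Definition lin_dep (K : numFieldType) (X : lmodType K) (x z : X) : Prop :=
  exists a b : K, (a != 0 \/ b != 0) /\ a *: x + b *: z = 0.

Definition dim_gt1 (K : numFieldType) (X : lmodType K) : Prop :=
  exists x z : X, ~ lin_dep x z.

Definition is_2inner_product (K : numFieldType) (conjK : K -> K)
    (X : lmodType K) (ip : X -> X -> X -> K) : Prop :=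
  [/\ (forall x z : X, 0 <= ip x x z /\ (ip x x z = 0 <-> lin_dep x z)),
      (forall x z : X, ip x x z = ip z z x),
      (forall x y z : X, ip y x z = conjK (ip x y z)),
      (forall (a : K) (x y z : X), ip (a *: x) y z = a * ip x y z) &
      (forall x x' y z : X, ip (x + x') y z = ip x y z + ip x' y z)].

Definition norm2 (K : numFieldType) (sqrtK : K -> K) (X : lmodType K)
    (ip : X -> X -> X -> K) (x z : X) : K := sqrtK (ip x x z).

Definition cor23_ineq (K : numFieldType) (sqrtK : K -> K) (X : lmodType K)
    (ip : X -> X -> X -> K) (n : nat) (zs : 'I_n -> X) (z : X)
    (mu : 'I_n -> K) : Prop :=
  let M := \big[Num.max/0]_(i < n) (norm2 sqrtK ip (zs i) z) ^+ 2 in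
  let S2 := \sum_(i < n) `|mu i| ^+ 2 in
  let S4 := \sum_(i < n) `|mu i| ^+ 4 in
  let C := \sum_(i < n) \sum_(j < n | i != j) `|ip (zs i) (zs j) z| ^+ 2 in
  (norm2 sqrtK ip (\sum_(i < n) mu i *: zs i) z) ^+ 2
    <= S2 * M + sqrtK (S2 ^+ 2 - S4) * sqrtK C
  /\ S2 * M + sqrtK (S2 ^+ 2 - S4) * sqrtK C <= S2 * (M + sqrtK C).

(* Main.v *)
Require Import Defs.
From HB Require Import structures.
From mathcomp Require Import all_boot all_order all_algebra.
From mathcomp Require Import complex ring.
Import Order.TTheory GRing.Theory Num.Theory.
Local Open Scope ring_scope.


Section CS.
Variable K : numFieldType.

Lemma lagrange (I : finType) (P : pred I) (a b : I -> K) :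
  \sum_(i | P i) \sum_(j | P j) (a i * b j - a j * b i) ^+ 2 =
  2 * ((\sum_(i | P i) a i ^+ 2) * (\sum_(i | P i) b i ^+ 2)
       - (\sum_(i | P i) a i * b i) ^+ 2).
Proof.
have E : forall i j, (a i * b j - a j * b i) ^+ 2 =
   a i ^+ 2 * b j ^+ 2 + a j ^+ 2 * b i ^+ 2 - 2 * ((a i * b i) * (a j * b j)).
  by move=> i j; ring.
under eq_bigr do under eq_bigr do rewrite E.
under eq_bigr do rewrite sumrB big_split /=.
rewrite sumrB big_split /=.
rewrite [X in _ + X - _]exchange_big /=.
have E1 : (\sum_(i | P i) a i ^+ 2) * (\sum_(i | P i) b i ^+ 2) =
   \sum_(i | P i) \sum_(j | P j) a i ^+ 2 * b j ^+ 2.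
  by rewrite mulr_suml; apply: eq_bigr => i _; rewrite mulr_sumr.
have E2 : (\sum_(i | P i) a i * b i) ^+ 2 =
   \sum_(i | P i) \sum_(j | P j) (a i * b i * (a j * b j)).
  by rewrite expr2 mulr_suml; apply: eq_bigr => i _; rewrite mulr_sumr.
rewrite E1 E2 mulrBr; congr (_ - _); last first.
  by rewrite mulr_sumr; apply: eq_bigr => i _; rewrite mulr_sumr.
by rewrite mulr2n mulrDl !mul1r.
Qed.

Lemma cauchy_schwarz (I : finType) (P : pred I) (a b : I -> K) :
  (forall i, 0 <= a i) -> (forall i, 0 <= b i) ->
  (\sum_(i | P i) a i * b i) ^+ 2 <=
  (\sum_(i | P i) a i ^+ 2) * (\sum_(i | P i) b i ^+ 2).
Proof.
move=> ha hb.
have H : 0 <= 2 * ((\sum_(i | P i) a i ^+ 2) * (\sum_(i | P i) b i ^+ 2)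
       - (\sum_(i | P i) a i * b i) ^+ 2).
  rewrite -lagrange; apply: sumr_ge0 => i _; apply: sumr_ge0 => j _.
  rewrite -realEsqr; apply: realB; apply: realM; exact: ger0_real.
by rewrite -subr_ge0 -(pmulr_rge0 _ (ltr0Sn K 1)).
Qed.


Lemma bigmax_seq (I : eqType) (r : seq I) (f : I -> K) :
  (forall i, 0 <= f i) ->
  0 <= \big[Num.max/0]_(i <- r) f i /\
  forall i, i \in r -> f i <= \big[Num.max/0]_(i <- r) f i.
Proof.
move=> hf; elim: r => [|x r [IH1 IH2]]; first by rewrite big_nil.
rewrite big_cons.
have cmp : (f x >=< \big[Num.max/0]_(i <- r) f i)%O.
  by apply: real_comparable; apply: ger0_real.
split; first by rewrite comparable_le_max // hf.
move=> i; rewrite inE => /orP [/eqP -> | ir].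
  by rewrite comparable_le_max // lexx.
by rewrite comparable_le_max // IH2 // orbT.
Qed.

End CS.

Section Main.
Variables (K : numFieldType) (conjK sqrtK : K -> K) (X : lmodType K)
  (ip : X -> X -> X -> K).
Hypotheses (cD : forall a b, conjK (a + b) = conjK a + conjK b)
  (c0 : conjK 0 = 0)
  (cM : forall a b, conjK (a * b) = conjK a * conjK b)
  (cN : forall a, `|conjK a| = `|a|)
  (cK : forall a, a * conjK a = `|a| ^+ 2)
  (sq : forall x : K, 0 <= x -> 0 <= sqrtK x /\ sqrtK x ^+ 2 = x)
  (hip : is_2inner_product conjK ip).

Lemma sqrt_le x A B : 0 <= x -> 0 <= A -> 0 <= B -> x ^+ 2 <= A * B ->
  x <= sqrtK A * sqrtK B.
Proof.
move=> hx hA hB h.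
have [sA1 sA2] := sq _ hA; have [sB1 sB2] := sq _ hB.
rewrite -ler_sqr ?nnegrE ?mulr_ge0 // exprMn sA2 sB2 //.
Qed.

Lemma main_gen n (zs : 'I_n -> X) (z : X) (mu : 'I_n -> K) :
  cor23_ineq sqrtK ip zs z mu.
Proof.
case: hip => hpos hsym hconj hZ hD.
have ip0 : forall y, ip 0 y z = 0.
  by move=> y; rewrite -(scale0r 0) hZ mul0r.
have ipL : forall (I : finType) (F : I -> X) y,
    ip (\sum_i F i) y z = \sum_i ip (F i) y z.
  move=> I F y; apply: (big_morph (fun x => ip x y z)) => // x x'; exact: hD.
have conjS : forall (I : finType) (F : I -> K),
    conjK (\sum_i F i) = \sum_i conjK (F i).
  by move=> I F; apply: (big_morph conjK).
have ipR : forall (I : finType) (F : I -> X) x,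
    ip x (\sum_i F i) z = \sum_i ip x (F i) z.
  by move=> I F x; rewrite hconj ipL conjS; apply: eq_bigr => i _; rewrite -hconj.
have ipZr : forall a x y, ip x (a *: y) z = conjK a * ip x y z.
  by move=> a x y; rewrite hconj hZ cM -hconj.
set g := fun i j => ip (zs i) (zs j) z.
have gii : forall i, 0 <= g i i by move=> i; exact: (hpos _ _).1.
have n2 : forall x, norm2 sqrtK ip x z ^+ 2 = ip x x z.
  by move=> x; rewrite /norm2; exact: (sq _ (hpos x z).1).2.
rewrite /cor23_ineq /=.
set M := \big[Num.max/0]_(i < n) _.
set S2 := \sum_(i < n) `|mu i| ^+ 2.
set S4 := \sum_(i < n) `|mu i| ^+ 4.
set C := \sum_(i < n) \sum_(j < n | i != j) `|ip (zs i) (zs j) z| ^+ 2.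
have HM : M = \big[Num.max/0]_(i < n) g i i.
  by apply: eq_bigr => i _; rewrite n2.
have [M0 Mi] := @bigmax_seq K _ (index_enum 'I_n) _ gii.
rewrite -HM in M0 Mi.
have Mi' : forall i, g i i <= M by move=> i; apply: Mi; rewrite mem_index_enum.
pose T := \sum_(i < n) \sum_(j < n | i != j) (`|mu i| * `|mu j|) ^+ 2.
have T0 : 0 <= T by apply: sumr_ge0 => i _; apply: sumr_ge0 => j _; rewrite exprn_ge0 // mulr_ge0.
have S4_0 : 0 <= S4 by apply: sumr_ge0 => i _; rewrite exprn_ge0.
have S2_0 : 0 <= S2 by apply: sumr_ge0 => i _; rewrite exprn_ge0.
have C0 : 0 <= C by apply: sumr_ge0 => i _; apply: sumr_ge0 => j _; rewrite exprn_ge0.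
have HT : T = S2 ^+ 2 - S4.
  apply/eqP; rewrite eq_sym subr_eq; apply/eqP.
  rewrite /S2 expr2 mulr_suml /T /S4 -big_split /=; apply: eq_bigr => i _.
  rewrite mulr_sumr (bigD1 i) //= addrC; congr (_ + _).
    by apply: eq_big => [j|j _]; [rewrite eq_sym | rewrite exprMn].
  by rewrite -exprD.
pose D := \sum_(i < n) `|mu i| ^+ 2 * g i i.
pose O := \sum_(i < n) \sum_(j < n | i != j) mu i * conjK (mu j) * g i j.
have HE : norm2 sqrtK ip (\sum_(i < n) mu i *: zs i) z ^+ 2 = D + O.
  rewrite n2 ipL /D /O -big_split /=; apply: eq_bigr => i _.
  rewrite hZ ipR (bigD1 i) //= ipZr mulrDr mulrA cK; congr (_ + _).
  rewrite mulr_sumr; apply: eq_big => [j|j _]; [by rewrite eq_sym | by rewrite ipZr mulrA].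
have D0 : 0 <= D by apply: sumr_ge0 => i _; rewrite mulr_ge0 ?exprn_ge0.
have DM : D <= S2 * M.
  rewrite /S2 mulr_suml; apply: ler_sum => i _; apply: ler_wpM2l; rewrite ?exprn_ge0 //.
have Oreal : O \is Num.real.
  have -> : O = norm2 sqrtK ip (\sum_(i < n) mu i *: zs i) z ^+ 2 - D.
    by rewrite HE addrC addKr.
  by apply: realB; apply: ger0_real; rewrite // n2; exact: (hpos _ _).1.
have OC : O <= sqrtK T * sqrtK C.
  apply: (le_trans (real_ler_norm Oreal)).
  apply: (le_trans (ler_norm_sum _ _ _)).
  apply: le_trans (_ : \sum_(i < n) \sum_(j < n | i != j)
        (`|mu i| * `|mu j|) * `|g i j| <= _).
    apply: ler_sum => i _; apply: (le_trans (ler_norm_sum _ _ _)).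
    by apply: ler_sum => j _; rewrite !normrM cN.
  apply: sqrt_le => //.
    by apply: sumr_ge0 => i _; apply: sumr_ge0 => j _; rewrite !mulr_ge0.
  rewrite /T /C !pair_big_dep /=.
  apply: cauchy_schwarz => p; rewrite ?mulr_ge0 //.
split.
  by rewrite HE -HT; apply: lerD.
rewrite mulrDr lerD2l ler_wpM2r //; first by case: (sq _ C0).
have [sT1 sT2] := sq _ T0.
rewrite -HT -ler_sqr ?nnegrE // sT2 HT lerBlDr lerDl //.
Qed.

End Main.

Local Open Scope complex_scope.

Theorem corollary2p3 :
  (* real case: K = R *)
  (forall (R : rcfType) (X : lmodType R) (ip : X -> X -> X -> R),
      dim_gt1 X -> is_2inner_product id ip ->
      forall (n : nat) (zs : 'I_n -> X) (z : X) (mu : 'I_n -> R),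
        (0 < n)%N -> cor23_ineq Num.sqrt ip zs z mu)
  /\
  (* complex case: K = R[i] *)
  (forall (R : rcfType) (X : lmodType R[i]) (ip : X -> X -> X -> R[i]),
      dim_gt1 X -> is_2inner_product Num.conj ip ->
      forall (n : nat) (zs : 'I_n -> X) (z : X) (mu : 'I_n -> R[i]),
        (0 < n)%N -> cor23_ineq sqrtC ip zs z mu).
Proof.
split.
  move=> R X ip _ hip n zs z mu _.
  apply: (@main_gen R id Num.sqrt X ip).
  - by [].
  - by [].
  - by [].
  - by [].
  - by move=> a; rewrite real_normK ?num_real // expr2.
  - by move=> x hx; rewrite sqrtr_ge0 sqr_sqrtr.
  - exact: hip.
move=> R X ip _ hip n zs z mu _.
apply: (@main_gen _ Num.conj sqrtC X ip).
- by move=> a b; rewrite rmorphD.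
- by rewrite rmorph0.
- by move=> a b; rewrite rmorphM.
- by move=> a; rewrite norm_conjC.
- by move=> a; rewrite normCK.
- by move=> x hx; rewrite sqrtC_ge0 sqrtCK.
- exact: hip.
Qed.
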